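(* The worst-case time complexity of the Gay–Hole subtyping algorithm described in the context, run on input $(T,U)$, is $O(n^{n^3})$, where $n = |T| + |U|$.
   Context: Session types are given by the grammar $T ::= \mathsf{end} \mid X \mid \mu X.T \mid {?}[T_1,\dots,T_n].S \mid {!}[T_1,\dots,T_n].S \mid \&\langle l_1:T_1,\dots,l_n:T_n\rangle \mid \oplus\langle l_1:T_1,\dots,l_n:T_n\rangle$ (input, output, branch, select); the inputs $T,U$ are closed types, types are identified up to $\alpha$-conversion and substitutions are capture-avoiding. The size $|T|$ is the number of constructors: $|\mathsf{end}| = |X| = 1$, $|\mu X.T| = 1 + |T|$, $|\&\langle l_i:T_i\rangle_{i}| = |\oplus\langle l_i:T_i\rangle_{i}| = 1 + \sum_{i} |T_i|$, $|{?}[T_1,\dots,T_n].S| = |{!}[T_1,\dots,T_n].S| = 1 + \sum_i|T_i| + |S|$. Judgements have the form $\Sigma \vdash T \le U$, where $\Sigma$ is a finite set of pairs $V \le W$ of types. The algorithmic rules are: (AS-Assump) $\Sigma \vdash T\le U$ holds if $T \le U \in \Sigma$; (AS-End) $\Sigma \vdash \mathsf{end}\le\mathsf{end}$; (AS-RecL) from $\Sigma \cup\{\mu X.T \le U\} \vdash T[\mu X.T/X] \le U$ infer $\Sigma \vdash \mu X.T \le U$; (AS-RecR) from $\Sigma\cup\{T \le \mu X.U\} \vdash T \le U[\mu X.U/X]$ infer $\Sigma \vdash T \le \mu X.U$; (AS-In) from $\Sigma \vdash T_i \le U_i$ for all $i$ and $\Sigma \vdash V \le W$ infer $\Sigma \vdash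 {?}[T_1,\dots,T_k].V \le {?}[U_1,\dots,U_k].W$; (AS-Out) from $\Sigma \vdash U_i \le T_i$ for all $i$ and $\Sigma \vdash V \le W$ infer $\Sigma \vdash {!}[T_1,\dots,T_k].V \le {!}[U_1,\dots,U_k].W$; (AS-Bra) if $m\le n$ and $\Sigma \vdash S_i \le T_i$ for $1\le i\le m$ infer $\Sigma \vdash \&\langle l_i:S_i\rangle_{1\le i\le m} \le \&\langle l_i:T_i\rangle_{1\le i\le n}$; (AS-Sel) if $m\le n$ and $\Sigma \vdash S_i \le T_i$ for $1\le i\le m$ infer $\Sigma \vdash \oplus\langle l_i:S_i\rangle_{1\le i\le n} \le \oplus\langle l_i:T_i\rangle_{1\le i\le m}$. The Gay–Hole algorithm decides whether $T$ is a subtype of $U$ by attempting to build a derivation of $\emptyset \vdash T \le U$ bottom-up: at each judgement it applies the applicable rule, with AS-Assump taking highest priority and AS-RecL preferred over AS-RecR when both apply (the remaining rules apply to disjoint sets of judgements), recursively processing all premises; it fails if some judgement matches no rule. *)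

(* Defs.v *)
From Stdlib Require List.
From mathcomp Require Import all_boot.
Set Implicit Arguments. Unset Strict Implicit. Unset Printing Implicit Defensive.

(** Session types, with de Bruijn indices for type variables, so that types
    are identified up to alpha-conversion by construction. Labels are nats. *)
Inductive ty : Type :=
  | TEnd : ty
  | TVar : nat -> ty
  | TRec : ty -> ty                          (* mu X. T, X = index 0 *)
  | TIn  : list ty -> ty -> ty
  | TOut : list ty -> ty -> ty
  | TBra : list (nat * ty) -> ty
  | TSel : list (nat * ty) -> ty.

Fixpoint size_ty (t : ty) : nat :=
  match t with
  | TEnd => 1
  | TVar _ => 1
  | TRec t => 1 + size_ty t
  | TIn ts s => 1 + sumn (map size_ty ts) + size_ty s
  | TOut ts s => 1 + sumn (map size_ty ts) + size_ty s
  | TBra bs => 1 + sumn (map (fun p => size_ty p.2) bs)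
  | TSel bs => 1 + sumn (map (fun p => size_ty p.2) bs)
  end.

Fixpoint wf (d : nat) (t : ty) : bool :=
  match t with
  | TEnd => true
  | TVar n => n < d
  | TRec t => wf d.+1 t
  | TIn ts s => all (wf d) ts && wf d s
  | TOut ts s => all (wf d) ts && wf d s
  | TBra bs => all (fun p => wf d p.2) bs
  | TSel bs => all (fun p => wf d p.2) bs
  end.

Definition closed_ty (t : ty) : bool := wf 0 t.

Fixpoint lift (c : nat) (t : ty) : ty :=
  match t with
  | TEnd => TEnd
  | TVar n => if c <= n then TVar n.+1 else TVar n
  | TRec t => TRec (lift c.+1 t)
  | TIn ts s => TIn (map (lift c) ts) (lift c s)
  | TOut ts s => TOut (map (lift c) ts) (lift c s)
  | TBra bs => TBra (map (fun p => (p.1, lift c p.2)) bs)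
  | TSel bs => TSel (map (fun p => (p.1, lift c p.2)) bs)
  end.

Fixpoint subst (k : nat) (u : ty) (t : ty) : ty :=
  match t with
  | TEnd => TEnd
  | TVar n => if n == k then u else if k < n then TVar n.-1 else TVar n
  | TRec t => TRec (subst k.+1 (lift 0 u) t)
  | TIn ts s => TIn (map (subst k u) ts) (subst k u s)
  | TOut ts s => TOut (map (subst k u) ts) (subst k u s)
  | TBra bs => TBra (map (fun p => (p.1, subst k u p.2)) bs)
  | TSel bs => TSel (map (fun p => (p.1, subst k u p.2)) bs)
  end.

Definition unfold_body (t : ty) : ty := subst 0 (TRec t) t.

Definition is_rec (t : ty) : bool := if t is TRec _ then true else false.

(** Premises of the structural rules AS-End, AS-In, AS-Out, AS-Bra, AS-Sel
    (in order); None if none of them applies to T <= U. *)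
Definition struct_premises (T U : ty) : option (list (ty * ty)) :=
  match T, U with
  | TEnd, TEnd => Some [::]
  | TIn ts v, TIn us w =>
      if size ts == size us then Some (zip ts us ++ [:: (v, w)]) else None
  | TOut ts v, TOut us w =>
      if size ts == size us then Some (zip us ts ++ [:: (v, w)]) else None
  | TBra ss, TBra ts =>
      if (size ss <= size ts) && (map fst ss == take (size ss) (map fst ts))
      then Some (zip (map snd ss) (map snd ts)) else None
  | TSel ss, TSel ts =>
      if (size ts <= size ss) && (map fst ts == take (size ts) (map fst ss))
      then Some (zip (map snd ss) (map snd ts)) else None
  | _, _ => None
  end.

(** Execution of the Gay-Hole algorithm: [exec S T U b k] means that processing
    the judgement S |- T <= U terminates with result b (true = success,
    false = failure) after processing k judgements in total (cost model:
    one unit per judgement processed). AS-Assump has top priority, then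
    AS-RecL, then AS-RecR, then the (mutually exclusive) structural rules;
    all premises are processed recursively, each under the same Sigma. *)
Inductive exec : list (ty * ty) -> ty -> ty -> bool -> nat -> Prop :=
  | ExAssump S T U :
      List.In (T, U) S -> exec S T U true 1
  | ExRecL S T' U b k :
      ~ List.In (TRec T', U) S ->
      exec ((TRec T', U) :: S) (unfold_body T') U b k ->
      exec S (TRec T') U b k.+1
  | ExRecR S T U' b k :
      ~ List.In (T, TRec U') S -> ~~ is_rec T ->
      exec ((T, TRec U') :: S) T (unfold_body U') b k ->
      exec S T (TRec U') b k.+1
  | ExStruct S T U ps b k :
      ~ List.In (T, U) S -> ~~ is_rec T -> ~~ is_rec U ->
      struct_premises T U = Some ps ->
      execs S ps b k ->
      exec S T U b k.+1
  | ExFail S T U :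
      ~ List.In (T, U) S -> ~~ is_rec T -> ~~ is_rec U ->
      struct_premises T U = None ->
      exec S T U false 1
with execs : list (ty * ty) -> list (ty * ty) -> bool -> nat -> Prop :=
  | ExsNil S : execs S [::] true 0
  | ExsCons S A B ps b1 k1 b2 k2 :
      exec S A B b1 k1 -> execs S ps b2 k2 ->
      execs S ((A, B) :: ps) (b1 && b2) (k1 + k2).

(* Main.v *)
Require Import Defs.
From mathcomp Require Import all_boot.
From mathcomp Require Import zify.
From Stdlib Require List Classical.
Import List (Forall, Forall_nil, Forall_cons).
Import Defs.
Set Implicit Arguments. Unset Strict Implicit.

Lemma ty_ind' (P : ty -> Prop) :
  P TEnd -> (forall n, P (TVar n)) -> (forall t, P t -> P (TRec t)) ->
  (forall ts s, Forall P ts -> P s -> P (TIn ts s)) ->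
  (forall ts s, Forall P ts -> P s -> P (TOut ts s)) ->
  (forall bs, Forall (fun p => P p.2) bs -> P (TBra bs)) ->
  (forall bs, Forall (fun p => P p.2) bs -> P (TSel bs)) ->
  forall t, P t.
Proof.
move=> HE HV HR HI HO HB HS.
fix IH 1 => t; case: t => [|n|t|ts s|ts s|bs|bs].
- exact: HE.
- exact: HV.
- exact: HR.
- apply: HI; last exact: IH.
  elim: ts => [|x ts IHts]; constructor; [exact: IH | exact: IHts].
- apply: HO; last exact: IH.
  elim: ts => [|x ts IHts]; constructor; [exact: IH | exact: IHts].
- apply: HB.
  elim: bs => [|x bs IHbs]; constructor; [exact: IH | exact: IHbs].
- apply: HS.
  elim: bs => [|x bs IHbs]; constructor; [exact: IH | exact: IHbs].
Qed.

Lemma map_eq_Forall (A B : Type) (P : A -> Prop) (f g : A -> B) l :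
  Forall P l -> (forall x, P x -> f x = g x) -> seq.map f l = seq.map g l.
Proof. elim=> //= x l' Hx _ IH H; by rewrite H // IH. Qed.

Lemma subst_lift t : forall c w, subst c w (lift c t) = t.
Proof.
elim/ty_ind': t => [|n|t IH|ts s Hts IH|ts s Hts IH|bs Hbs|bs Hbs] c w /=.
- by [].
- case: ifP => H /=; repeat case: ifP => /= ?; try lia; f_equal; lia.
- by rewrite IH.
- rewrite IH -map_comp; f_equal; rewrite -[RHS]map_id; apply: (map_eq_Forall Hts) => x /= ->. by [].
- rewrite IH -map_comp; f_equal; rewrite -[RHS]map_id; apply: (map_eq_Forall Hts) => x /= ->. by [].
- rewrite -map_comp; f_equal; rewrite -[RHS]map_id; apply: (map_eq_Forall Hbs) => [[l x]] /= ->. by [].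
- rewrite -map_comp; f_equal; rewrite -[RHS]map_id; apply: (map_eq_Forall Hbs) => [[l x]] /= ->. by [].
Qed.

Lemma map_pair_comp (f g : ty -> ty) (bs : seq (nat * ty)) :
  seq.map (fun p => (p.1, f p.2)) (seq.map (fun p => (p.1, g p.2)) bs) =
  seq.map (fun p => (p.1, (f \o g) p.2)) bs.
Proof. by elim: bs => //= [[l x] bs] ->. Qed.

Lemma map_eq_Forall2 (P : nat * ty -> Prop) (f g : ty -> ty) (bs : seq (nat * ty)) :
  Forall P bs -> (forall x, P x -> f x.2 = g x.2) ->
  seq.map (fun p => (p.1, f p.2)) bs = seq.map (fun p => (p.1, g p.2)) bs.
Proof. elim=> //= -[l x] l' /= Hx _ IH H; by rewrite (H (l, x)) // IH. Qed.

Ltac lst H := rewrite ?map_pair_comp; f_equal; apply: (map_eq_Forall2 H); let Hx := fresh in intros ? Hx; simpl in Hx |- *; apply: Hx => //.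
Ltac lstts H IH := rewrite IH // -?map_comp; f_equal; apply: (map_eq_Forall H); let Hx := fresh in intros ? Hx; simpl in Hx |- *; apply: Hx => //.

Lemma lift_lift t : forall c j, c <= j -> lift j.+1 (lift c t) = lift c (lift j t).
Proof.
elim/ty_ind': t => [|n|t IH|ts s Hts IH|ts s Hts IH|bs Hbs|bs Hbs] c j Hcj /=.
- by [].
- repeat (case: ifP => /= ?); try lia; try (f_equal; lia).
- by rewrite IH.
- lstts Hts IH.
- lstts Hts IH.
- lst Hbs.
- lst Hbs.
Qed.

Lemma subst_lift_comm t : forall c i u, c <= i ->
  subst i.+1 (lift c u) (lift c t) = lift c (subst i u t).
Proof.
elim/ty_ind': t => [|n|t IH|ts s Hts IH|ts s Hts IH|bs Hbs|bs Hbs] c i u Hci /=.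
- by [].
- repeat (case: ifP => /= ?); try lia; try (f_equal; lia); try (move/eqP: _; lia).
- by rewrite -IH // lift_lift.
- lstts Hts IH.
- lstts Hts IH.
- lst Hbs.
- lst Hbs.
Qed.

Lemma subst_subst s : forall j i u v, j <= i ->
  subst i u (subst j v s) = subst j (subst i u v) (subst i.+1 (lift j u) s).
Proof.
elim/ty_ind': s => [|n|t IH|ts s Hts IH|ts s Hts IH|bs Hbs|bs Hbs] j i u v Hji /=.
- by [].
- repeat (case: ifP => /= ?); try lia; try (f_equal; lia); try (move/eqP: _; lia);
  try by rewrite subst_lift.
- rewrite IH //; f_equal; by rewrite subst_lift_comm // lift_lift.
- lstts Hts IH.
- lstts Hts IH.
- lst Hbs.
- lst Hbs.
Qed.

Lemma catE (A : Type) (s1 s2 : seq A) : s1 ++ s2 = List.app s1 s2.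
Proof. by elim: s1 => //= x s ->. Qed.
Lemma mapE (A B : Type) (f : A -> B) s : seq.map f s = List.map f s.
Proof. by elim: s => //= x s ->. Qed.
Lemma flattenE (A : Type) (l : seq (seq A)) : flatten l = List.concat l.
Proof. by elim: l => //= x s <-; rewrite catE. Qed.
Lemma sizeE (A : Type) (s : seq A) : size s = length s.
Proof. by elim: s => //= x s ->. Qed.

Lemma in_cat' (A : Type) (x : A) s1 s2 : List.In x (s1 ++ s2) <-> List.In x s1 \/ List.In x s2.
Proof. rewrite catE; exact: List.in_app_iff. Qed.
Lemma in_map' (A B : Type) (f : A -> B) y s : List.In y (seq.map f s) <-> exists x, f x = y /\ List.In x s.
Proof. rewrite mapE; exact: List.in_map_iff. Qed.
Lemma in_flatmap (A B : Type) (f : A -> seq B) y s :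
  List.In y (flatten (seq.map f s)) <-> exists x, List.In x s /\ List.In y (f x).
Proof.
rewrite flattenE mapE List.in_concat; split.
- move=> [l [/List.in_map_iff [x [<- Hx]] Hy]]; by exists x.
- move=> [x [Hx Hy]]; exists (f x); split => //; exact: List.in_map.
Qed.

Definition comps (t : ty) : seq ty :=
  match t with
  | TRec t' => [:: unfold_body t']
  | TIn ts s => ts ++ [:: s]
  | TOut ts s => ts ++ [:: s]
  | TBra bs => seq.map snd bs
  | TSel bs => seq.map snd bs
  | _ => [::]
  end.

Fixpoint sub (t : ty) : seq ty :=
  match t with
  | TEnd => [:: TEnd]
  | TVar n => [:: TVar n]
  | TRec t' => TRec t' :: seq.map (subst 0 (TRec t')) (sub t')
  | TIn ts s => TIn ts s :: (flatten (seq.map sub ts) ++ sub s)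
  | TOut ts s => TOut ts s :: (flatten (seq.map sub ts) ++ sub s)
  | TBra bs => TBra bs :: flatten (seq.map (fun p => sub p.2) bs)
  | TSel bs => TSel bs :: flatten (seq.map (fun p => sub p.2) bs)
  end.

Lemma self_in_sub t : List.In t (sub t).
Proof. case: t => /=; auto. Qed.

Definition is_var (t : ty) := if t is TVar _ then true else false.

Lemma comps_subst S u : ~~ is_var S ->
  comps (subst 0 u S) = seq.map (subst 0 u) (comps S).
Proof.
case: S => //= [t|ts s|ts s|bs|bs] _.
- by rewrite /unfold_body (subst_subst _ _ _ (leqnn 0)).
- by rewrite map_cat.
- by rewrite map_cat.
- by rewrite -!map_comp.
- by rewrite -!map_comp.
Qed.

Definition good (L : seq ty) := forall S X, List.In S L -> List.In X (comps S) -> List.In X L.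

Lemma good_sub t : good (sub t).
Proof.
elim/ty_ind': t => [|n|t IH|ts s Hts IH|ts s Hts IH|bs Hbs|bs Hbs] S X /=.
- by move=> [<-|[]].
- by move=> [<-|[]].
- have Hhead : List.In (unfold_body t) (TRec t :: seq.map (subst 0 (TRec t)) (sub t)).
    right; apply/in_map'; exists t; split => //; exact: self_in_sub.
  move=> [<-|/in_map' [S' [<- HS']]]; first by move=> [<-|[]].
  case HV: (is_var S').
  + case: S' HS' HV => //= m _ _; case: m => [|m] /=; first by move=> [<-|[]].
    by [].
  + rewrite comps_subst ?HV // => /in_map' [Y [<- HY]].
    right; apply/in_map'; exists Y; split => //; exact: IH HS' HY.
- move=> [<-|/in_cat' [/in_flatmap [y [Hy HS]]|HS]] HX.
  + right; apply/in_cat'; move: HX => /in_cat' [HX|[<-|[]]].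
    * left; apply/in_flatmap; exists X; split => //; exact: self_in_sub.
    * right; exact: self_in_sub.
  + right; apply/in_cat'; left; apply/in_flatmap; exists y; split => //.
    move: Hts => /List.Forall_forall /(_ y Hy) Hg; exact: Hg HS HX.
  + right; apply/in_cat'; right; exact: IH HS HX.
- move=> [<-|/in_cat' [/in_flatmap [y [Hy HS]]|HS]] HX.
  + right; apply/in_cat'; move: HX => /in_cat' [HX|[<-|[]]].
    * left; apply/in_flatmap; exists X; split => //; exact: self_in_sub.
    * right; exact: self_in_sub.
  + right; apply/in_cat'; left; apply/in_flatmap; exists y; split => //.
    move: Hts => /List.Forall_forall /(_ y Hy) Hg; exact: Hg HS HX.
  + right; apply/in_cat'; right; exact: IH HS HX.
- move=> [<-|/in_flatmap [y [Hy HS]]] HX.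
  + right; apply/in_flatmap; move: HX => /in_map' [p [<- Hp]]; exists p; split => //; exact: self_in_sub.
  + right; apply/in_flatmap; exists y; split => //.
    move: Hbs => /List.Forall_forall /(_ y Hy) Hg; exact: Hg HS HX.
- move=> [<-|/in_flatmap [y [Hy HS]]] HX.
  + right; apply/in_flatmap; move: HX => /in_map' [p [<- Hp]]; exists p; split => //; exact: self_in_sub.
  + right; apply/in_flatmap; exists y; split => //.
    move: Hbs => /List.Forall_forall /(_ y Hy) Hg; exact: Hg HS HX.
Qed.

Lemma sumn_le_Forall (A : Type) (P : A -> Prop) (f g : A -> nat) l :
  Forall P l -> (forall x, P x -> f x <= g x) -> sumn (seq.map f l) <= sumn (seq.map g l).
Proof. elim=> //= x l' Hx _ IH H; apply: leq_add; [exact: H | exact: IH]. Qed.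

Lemma in_sumn (A : Type) (f : A -> nat) y l : List.In y l -> f y <= sumn (seq.map f l).
Proof. elim: l => //= x l IH [<-|H]; first exact: leq_addr. by rewrite (leq_trans (IH H)) // leq_addl. Qed.

Lemma size_ty_gt0 t : 0 < size_ty t.
Proof. by case: t. Qed.

Lemma size_le_sumn (A : Type) (f : A -> nat) l : (forall x, 0 < f x) -> size l <= sumn (seq.map f l).
Proof. move=> H; elim: l => //= x l IH; have := H x; lia. Qed.

Lemma size_sub t : size (sub t) <= size_ty t.
Proof.
elim/ty_ind': t => [|n|t IH|ts s Hts IH|ts s Hts IH|bs Hbs|bs Hbs] //=.
- by rewrite size_map.
- rewrite size_cat size_flatten /shape -map_comp -addnA ltnS; apply: leq_add => //.
  exact: (sumn_le_Forall Hts).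
- rewrite size_cat size_flatten /shape -map_comp -addnA ltnS; apply: leq_add => //.
  exact: (sumn_le_Forall Hts).
- rewrite size_flatten /shape -map_comp ltnS.
  exact: (sumn_le_Forall Hbs).
- rewrite size_flatten /shape -map_comp ltnS.
  exact: (sumn_le_Forall Hbs).
Qed.

Lemma width_sub t : forall S, List.In S (sub t) -> size (comps S) < size_ty t.
Proof.
elim/ty_ind': t => [|n|t IH|ts s Hts IH|ts s Hts IH|bs Hbs|bs Hbs] S /=.
- by move=> [<-|[]].
- by move=> [<-|[]].
- move=> [<-|/in_map' [S' [<- HS']]] /=; first by have := size_ty_gt0 t; lia.
  case HV: (is_var S').
  + case: S' HS' HV => //= m _ _; case: m => [|m] /=; first by have := size_ty_gt0 t; lia.
    by [].
  + rewrite comps_subst ?HV // size_map; have := IH _ HS'; lia.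
- have := size_le_sumn ts size_ty_gt0.
  move=> Hle [<-|/in_cat' [/in_flatmap [y [Hy HS]]|HS]] /=.
  + rewrite size_cat /=; have := size_ty_gt0 s; lia.
  + move: Hts => /List.Forall_forall /(_ y Hy) /(_ S HS).
    have := in_sumn size_ty Hy; lia.
  + have := IH S HS; lia.
- have := size_le_sumn ts size_ty_gt0.
  move=> Hle [<-|/in_cat' [/in_flatmap [y [Hy HS]]|HS]] /=.
  + rewrite size_cat /=; have := size_ty_gt0 s; lia.
  + move: Hts => /List.Forall_forall /(_ y Hy) /(_ S HS).
    have := in_sumn size_ty Hy; lia.
  + have := IH S HS; lia.
- have := size_le_sumn bs (fun p : nat * ty => size_ty_gt0 p.2).
  move=> Hle [<-|/in_flatmap [y [Hy HS]]] /=.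
  + rewrite size_map; lia.
  + move: Hbs => /List.Forall_forall /(_ y Hy) /(_ S HS).
    have := in_sumn (fun p : nat * ty => size_ty p.2) Hy; lia.
- have := size_le_sumn bs (fun p : nat * ty => size_ty_gt0 p.2).
  move=> Hle [<-|/in_flatmap [y [Hy HS]]] /=.
  + rewrite size_map; lia.
  + move: Hbs => /List.Forall_forall /(_ y Hy) /(_ S HS).
    have := in_sumn (fun p : nat * ty => size_ty p.2) Hy; lia.
Qed.

Lemma in_zip (A B : Type) (a : A) (b : B) s t :
  List.In (a, b) (zip s t) -> List.In a s /\ List.In b t.
Proof.
elim: s t => [|x s IH] [|y t] //= [[<- <-]|H]; first by split; left.
by case: (IH _ H) => H1 H2; split; right.
Qed.

Lemma size_zip' (A B : Type) (s : seq A) (t : seq B) : size (zip s t) <= size s.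
Proof. elim: s t => [|x s IH] [|y t] //=; exact: IH. Qed.

Lemma size_zip'' (A B : Type) (s : seq A) (t : seq B) : size (zip s t) <= size t.
Proof. elim: s t => [|x s IH] [|y t] //=; exact: IH. Qed.

Lemma premises_comps A B ps : struct_premises A B = Some ps ->
  size ps <= size (comps A) /\
  forall a b, List.In (a, b) ps ->
    (List.In a (comps A) /\ List.In b (comps B)) \/
    (List.In a (comps B) /\ List.In b (comps A)).
Proof.
case: A => [|n|t|ts v|ts v|ss|ss]; case: B => [|n'|t'|us w|us w|ss'|ss'] //=;
  try (by case=> <-).
- case: ifP => // _ [<-]; split.
  + by rewrite !size_cat /= leq_add2r size_zip'.
  + move=> a b /in_cat' [Hz|[E|[]]]; first have [Ha Hb] := in_zip Hz.
    * left; split; apply/in_cat'; auto.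
    * case: E => <- <-; left; split; apply/in_cat'; right; left; done.
- case: ifP => // _ [<-]; split.
  + by rewrite !size_cat /= leq_add2r size_zip''.
  + move=> a b /in_cat' [Hz|[E|[]]]; first have [Ha Hb] := in_zip Hz.
    * right; split; apply/in_cat'; auto.
    * case: E => <- <-; left; split; apply/in_cat'; right; left; done.
- case: ifP => // _ [<-]; split.
  + by rewrite size_zip'.
  + move=> a b Hz; have [Ha Hb] := in_zip Hz; left; split; done.
- case: ifP => // _ [<-]; split.
  + by rewrite size_zip'.
  + move=> a b Hz; have [Ha Hb] := in_zip Hz; left; split; done.
Qed.

Lemma comps_lt A X : ~~ is_rec A -> List.In X (comps A) -> size_ty X < size_ty A.
Proof.
case: A => //= [ts v|ts v|bs|bs] _.
- move=> /in_cat' [H|[<-|[]]]; last lia.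
  have := in_sumn size_ty H; lia.
- move=> /in_cat' [H|[<-|[]]]; last lia.
  have := in_sumn size_ty H; lia.
- move=> /in_map' [p [<- Hp]]; have := in_sumn (fun p : nat * ty => size_ty p.2) Hp; lia.
- move=> /in_map' [p [<- Hp]]; have := in_sumn (fun p : nat * ty => size_ty p.2) Hp; lia.
Qed.

Lemma count_lt_size (A : Type) (p : pred A) x l : List.In x l -> ~~ p x -> count p l < size l.
Proof.
elim: l => //= y l IH [<- /negbTE ->|H Hp]; first by rewrite add0n ltnS count_size.
have := IH H Hp; case: (p y) => /=; lia.
Qed.

Lemma count_lt_sub (A : Type) (p p' : pred A) x l : (forall y, p' y -> p y) ->
  List.In x l -> p x -> ~~ p' x -> count p' l < count p l.
Proof.
move=> Hsub; elim: l => //= y l IH [<- Hp /negbTE Hp'|H Hp Hp'].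
- rewrite Hp Hp' /= add0n ltnS; apply: sub_count => z; exact: Hsub.
- have := IH H Hp Hp'; case E: (p' y); first by rewrite (Hsub _ E); lia.
  case: (p y) => /=; lia.
Qed.

Lemma execs_build Sigma ps K :
  (forall a b, List.In (a, b) ps -> exists bb k, exec Sigma a b bb k /\ k <= K) ->
  exists bb k, execs Sigma ps bb k /\ k <= size ps * K.
Proof.
elim: ps => [|[a b] ps IH] H /=; first by exists true, 0; split => //; constructor.
have [b1 [k1 [E1 H1]]] := H a b (or_introl erefl).
have [b2 [k2 [E2 H2]]] := IH (fun a' b' Hin => H a' b' (or_intror Hin)).
exists (b1 && b2), (k1 + k2); split; first exact: ExsCons.
rewrite mulSn; exact: leq_add.
Qed.

Definition hC (C : seq ty) (A B : ty) :=
  count (fun x => size_ty x < maxn (size_ty A) (size_ty B)) C.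
Definition PC (C : seq ty) :=
  List.filter (fun p : ty * ty => is_rec p.1 || is_rec p.2) (List.list_prod C C).

Lemma hC_lt C A B : List.In A C -> List.In B C -> hC C A B < size C.
Proof.
move=> HA HB; rewrite /hC; case: (leqP (size_ty A) (size_ty B)) => H.
- apply: (count_lt_size HB); rewrite /= -leqNgt; lia.
- apply: (count_lt_size HA); rewrite /= -leqNgt; lia.
Qed.

Lemma hC_child C A B a b : List.In a C -> List.In b C ->
  maxn (size_ty a) (size_ty b) < maxn (size_ty A) (size_ty B) -> hC C a b < hC C A B.
Proof.
move=> Ha Hb Hm; rewrite /hC.
have Hsub : forall y : ty, size_ty y < maxn (size_ty a) (size_ty b) ->
   size_ty y < maxn (size_ty A) (size_ty B) by move=> y Hy; exact: ltn_trans Hy Hm.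
case: (boolP (size_ty a <= size_ty b)) => H.
- apply: (@count_lt_sub _ (fun y => size_ty y < maxn (size_ty A) (size_ty B)) (fun y => size_ty y < maxn (size_ty a) (size_ty b)) b C Hsub Hb) => /=; first by move: Hm; lia.
  rewrite -leqNgt; lia.
- apply: (@count_lt_sub _ (fun y => size_ty y < maxn (size_ty A) (size_ty B)) (fun y => size_ty y < maxn (size_ty a) (size_ty b)) a C Hsub Ha) => /=; first by move: Hm; lia.
  rewrite -leqNgt; lia.
Qed.

Lemma PC_in C A B : List.In A C -> List.In B C -> is_rec A || is_rec B -> List.In (A, B) (PC C).
Proof. move=> HA HB Hr; apply/List.filter_In; split => //; exact: List.in_prod. Qed.

Lemma run C n : good C -> (forall S, List.In S C -> size (comps S) < n) -> 1 < n ->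
  forall m Sigma A B,
  size C * (length (PC C) - length Sigma) + hC C A B < m ->
  List.NoDup Sigma -> List.incl Sigma (PC C) -> List.In A C -> List.In B C ->
  exists bb k, exec Sigma A B bb k /\
    k <= n ^ (size C * (length (PC C) - length Sigma) + hC C A B) /\
    (is_rec A || is_rec B -> k <= n ^ (size C * (length (PC C) - length Sigma))).
Proof.
move=> Hg Hw Hn; elim=> [|m IH] Sigma A B //= Hm Hnd Hinc HA HB.
have hpos : forall e, 0 < n ^ e by move=> e; rewrite expn_gt0; lia.
have hmono : forall e1 e2, e1 <= e2 -> n ^ e1 <= n ^ e2 by move=> e1 e2; apply: leq_pexp2l; lia.
have hsmono : forall e1 e2, e1 < e2 -> n ^ e1 < n ^ e2 by move=> e1 e2; rewrite ltn_exp2l.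
case: (Classical_Prop.classic (List.In (A, B) Sigma)) => Hin.
  exists true, 1; split; first exact: ExAssump.
  split; [exact: hpos | move=> _; exact: hpos].
have Hadd : is_rec A || is_rec B ->
    List.NoDup ((A, B) :: Sigma) /\ List.incl ((A, B) :: Sigma) (PC C) /\
    length Sigma < length (PC C).
  move=> Hr.
  have Hnd' : List.NoDup ((A, B) :: Sigma) by constructor.
  have Hinc' : List.incl ((A, B) :: Sigma) (PC C).
    apply: List.incl_cons => //; exact: PC_in.
  split => //; split => //.
  have := List.NoDup_incl_length Hnd' Hinc'; rewrite /=; lia.
set M := size C; set P := length (PC C); set S := length Sigma.
have HhAB := hC_lt HA HB.
have recstep : forall A',
    (is_rec A || is_rec B) -> List.In A' C ->
    forall B', List.In B' C ->
    (forall bb k, exec ((A, B) :: Sigma) A' B' bb k -> exec Sigma A B bb k.+1) ->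
    exists bb k, exec Sigma A B bb k /\
      k <= n ^ (M * (P - S) + hC C A B) /\
      (is_rec A || is_rec B -> k <= n ^ (M * (P - S))).
  move=> A' Hr HA' B' HB' Hex.
  have [Hnd' [Hinc' Hlt]] := Hadd Hr.
  have Hh' := hC_lt HA' HB'.
  have Heq : M * (P - S.+1) + M = M * (P - S).
    by rewrite -mulnSr; congr (M * _); rewrite /P /S; lia.
  have [bb [k [E [Hk _]]]] : exists bb k, exec ((A, B) :: Sigma) A' B' bb k /\
      k <= n ^ (M * (P - S.+1) + hC C A' B') /\
      (is_rec A' || is_rec B' -> k <= n ^ (M * (P - S.+1))).
    apply: IH => //.
    move: Hm Heq Hh'; rewrite -/M -/P -/S.
    set X := M * (P - S.+1); set Y := M * (P - S); lia.
  exists bb, k.+1; split; first exact: Hex.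
  have Hk2 : k.+1 <= n ^ (M * (P - S)).
    apply: leq_ltn_trans Hk _; apply: hsmono; move: Hh' Heq.
    set X := M * (P - S.+1); set Y := M * (P - S); lia.
  split => // ; apply: leq_trans Hk2 _; apply: hmono; exact: leq_addr.
case HrA : (is_rec A).
  case: A HA Hin Hadd HhAB Hm recstep HrA => // T' HA Hin Hadd HhAB Hm recstep _.
  have HU : List.In (unfold_body T') C by apply: (Hg _ _ HA); left.
  apply: (recstep _ erefl HU _ HB) => bb k E.
  by apply: ExRecL.
case HrB : (is_rec B).
  case: B HB Hin Hadd HhAB Hm recstep HrB => // U' HB Hin Hadd HhAB Hm recstep _.
  have HU : List.In (unfold_body U') C by apply: (Hg _ _ HB); left.
  have Hr : is_rec A || is_rec (TRec U') by rewrite orbT.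
  have Hex : forall bb k, exec ((A, TRec U') :: Sigma) A (unfold_body U') bb k ->
      exec Sigma A (TRec U') bb k.+1.
    move=> bb k E; apply: ExRecR => //; by rewrite HrA.
  have [bb [k [E1 [Hk1 Hk2]]]] := recstep A Hr HA (unfold_body U') HU Hex.
  exists bb, k; do 2 split => //; move=> _; exact: Hk2.
case Hsp : (struct_premises A B) => [ps|]; last first.
  exists false, 1; split; first by apply: ExFail => //; rewrite ?HrA ?HrB.
  split; [exact: hpos | by rewrite ?HrA ?HrB].
have [Hsz Hmem] := premises_comps Hsp.
have Hchild : forall a b, List.In (a, b) ps ->
    List.In a C /\ List.In b C /\ hC C a b < hC C A B.
  move=> a b Hab.
  have HcA : forall X, List.In X (comps A) -> List.In X C /\ size_ty X < size_ty A.
    move=> X HX; split; [exact: Hg HA HX | apply: comps_lt => //; by rewrite HrA].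
  have HcB : forall X, List.In X (comps B) -> List.In X C /\ size_ty X < size_ty B.
    move=> X HX; split; [exact: Hg HB HX | apply: comps_lt => //; by rewrite HrB].
  case: (Hmem a b Hab) => [[Ha Hb]|[Ha Hb]].
  - have [Ha1 Ha2] := HcA _ Ha; have [Hb1 Hb2] := HcB _ Hb.
    do 2 split => //; apply: hC_child => //; lia.
  - have [Ha1 Ha2] := HcB _ Ha; have [Hb1 Hb2] := HcA _ Hb.
    do 2 split => //; apply: hC_child => //; lia.
set e := M * (P - S) + hC C A B.
have [bb [k [E Hk]]] : exists bb k, execs Sigma ps bb k /\ k <= size ps * n ^ e.-1.
  apply: execs_build => a b Hab.
  have [Ha [Hb Hh]] := Hchild a b Hab.
  have [bb [k [E [Hk _]]]] : exists bb k, exec Sigma a b bb k /\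
      k <= n ^ (M * (P - S) + hC C a b) /\
      (is_rec a || is_rec b -> k <= n ^ (M * (P - S))).
    apply: IH => //; move: Hm Hh; rewrite /e -/M -/P -/S.
    set Y := M * (P - S); lia.
  exists bb, k; split => //; apply: leq_trans Hk _; apply: hmono.
  move: Hh; rewrite /e; set Y := M * (P - S); lia.
exists bb, k.+1; split.
  apply: ExStruct; [exact: Hin | by rewrite HrA | by rewrite HrB | exact: Hsp | exact: E].
split; last by rewrite ?HrA ?HrB.
case: ps Hsz Hmem Hchild Hsp E Hk => [|[a b] ps] Hsz Hmem Hchild Hsp E Hk.
  move: Hk; rewrite mul0n leqn0 => /eqP ->; exact: hpos.
have [_ [_ Hh]] := Hchild a b (or_introl erefl).
have He : e = e.-1.+1 by rewrite /e; lia.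
rewrite He expnS.
have Hps : size ((a, b) :: ps) < n by apply: leq_ltn_trans Hsz _; exact: Hw.
have := hpos e.-1; move: Hk Hps; set K := n ^ e.-1; set sp := size _; nia.
Qed.

Lemma filter_lt (A : Type) (f : A -> bool) x l :
  List.In x l -> f x = false -> (length (List.filter f l) < length l)%coq_nat.
Proof.
elim: l => //= y l IH [<- ->|H Hf].
- have := List.filter_length_le f l; lia.
- have := IH H Hf; case: (f y) => /=; lia.
Qed.

Lemma good_cat L1 L2 : good L1 -> good L2 -> good (L1 ++ L2).
Proof.
move=> G1 G2 S X /in_cat' [H|H] HX; apply/in_cat'; [left; exact: G1 H HX | right; exact: G2 H HX].
Qed.

Lemma cube_le M n : M <= n -> M * (M * M) <= n ^ 3.
Proof. move=> H; rewrite !expnS expn0 muln1; apply: leq_mul => //; exact: leq_mul. Qed.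

Theorem mainTheorem5 :
  exists c N : nat, forall T U : ty,
    closed_ty T -> closed_ty U -> N <= size_ty T + size_ty U ->
    exists (b : bool) (k : nat),
      exec [::] T U b k /\
      k <= c * (size_ty T + size_ty U) ^ ((size_ty T + size_ty U) ^ 3).
Proof.
exists 1, 0 => T U _ _ _; rewrite mul1n.
set n := size_ty T + size_ty U.
set C := sub T ++ sub U.
have Hg : good C by apply: good_cat; exact: good_sub.
have Hw : forall S, List.In S C -> size (comps S) < n.
  move=> S /in_cat' [H|H]; have := width_sub H; rewrite /n; lia.
have Hn : 1 < n by have := size_ty_gt0 T; have := size_ty_gt0 U; rewrite /n; lia.
have HT : List.In T C by apply/in_cat'; left; exact: self_in_sub.
have HU : List.In U C by apply/in_cat'; right; exact: self_in_sub.
have HM : size C <= n by rewrite size_cat; apply: leq_add; exact: size_sub.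
have HPC : (length (PC C) <= size C * size C)%coq_nat.
  rewrite sizeE -multE -List.length_prod; exact: List.filter_length_le.
have Hh := hC_lt HT HU.
have [bb [k [E [Hk Hrec]]]] := run Hg Hw Hn (m := (size C * (length (PC C) - 0) + hC C T U).+1)
   (Sigma := [::]) (leqnn _) (List.NoDup_nil _) (List.incl_nil_l _) HT HU.
exists bb, k; split => //.
have Hpow : forall e, e <= n ^ 3 -> k <= n ^ e -> k <= n ^ (n ^ 3).
  move=> e He Hke; apply: leq_trans Hke _; apply: leq_pexp2l => //; lia.
rewrite /= subn0 in Hk Hrec.
case HrT : (is_rec T).
- have HrTU : is_rec T || is_rec U by rewrite HrT.
  apply: (Hpow _ _ (Hrec HrTU)); apply: leq_trans (cube_le HM).
  apply: leq_mul => //; apply/leP; exact: HPC.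
- have Hlt : (length (PC C) < size C * size C)%coq_nat.
    rewrite sizeE -multE -List.length_prod; apply: (filter_lt (x := (T, T))).
    + exact: List.in_prod.
    + by rewrite /= HrT.
  apply: (Hpow _ _ Hk); apply: leq_trans (cube_le HM).
  have : size C * length (PC C) + size C <= size C * (size C * size C).
    rewrite -mulnSr; apply: leq_mul => //; apply/leP; exact: Hlt.
  lia.
Qed.
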